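(* Let $p\in[1,\infty]$, $\boldsymbol{w}\in\mathbb{R}^d\setminus\{\boldsymbol{0}\}$, $b\in\mathbb{R}$, $C(\boldsymbol{x})=\mathbf{1}\{\boldsymbol{w}\cdot\boldsymbol{x}+b>0\}$, let $\boldsymbol{\mu}_0\in\mathbb{R}^d$ be a unit vector (Euclidean norm), $\varepsilon>0$, $\delta\ge0$. Let $D_{\varepsilon,\delta|p}=\{\boldsymbol{v}\in\mathbb{R}^d:\|\boldsymbol{v}\|_p\le\varepsilon,\ |\boldsymbol{v}\cdot\boldsymbol{\mu}_0|\le\delta\}$ and let $\boldsymbol{u}_p$ be a maximizer of $|\boldsymbol{w}\cdot\boldsymbol{v}|$ over $\boldsymbol{v}\in D_{\varepsilon,\delta|p}$. Then $$\Omega_{\varepsilon,\delta|p}=\Omega(\boldsymbol{u}_p)\cup\Omega(-\boldsymbol{u}_p),$$ where $\Omega_{\varepsilon,\delta|p}$ is the set of $\boldsymbol{x}\in\mathbb{R}^d$ for which there is $\boldsymbol{x}'$ with $\|\boldsymbol{x}-\boldsymbol{x}'\|_p\le\varepsilon$, $|(\boldsymbol{x}-\boldsymbol{x}')\cdot\boldsymbol{\mu}_0|\le\delta$ and $C(\boldsymbol{x}')\ne C(\boldsymbol{x})$.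
   Context: For $\boldsymbol{v}\in\mathbb{R}^d$, $\Omega(\boldsymbol{v})=\{\boldsymbol{x}\in\mathbb{R}^d:C(\boldsymbol{x}+\boldsymbol{v})\ne C(\boldsymbol{x})\}$. *)

(* Defs.v *)
From HB Require Import structures.
From mathcomp Require Import all_boot all_order all_algebra.
From mathcomp Require Import all_classical all_reals all_analysis.
Set Implicit Arguments. Unset Strict Implicit. Unset Printing Implicit Defensive.
Import Order.TTheory GRing.Theory Num.Theory.
Local Open Scope ring_scope.
Local Open Scope classical_set_scope.

Definition dotp (R : realType) (d : nat) (u v : 'rV[R]_d) : R :=
  \sum_(i < d) u 0 i * v 0 i.

(* l^p norm for p in the extended reals: finite p uses (sum |v_i|^p)^(1/p),
   p = +oo uses max_i |v_i|.  (p = -oo is excluded by hypothesis 1 <= p.) *)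
Definition pnorm (R : realType) (d : nat) (p : \bar R) (v : 'rV[R]_d) : R :=
  match p with
  | EFin r => (\sum_(i < d) `|v 0 i| `^ r) `^ r^-1
  | +oo%E => \big[Num.max/0]_(i < d) `|v 0 i|
  | -oo%E => 0
  end.

Definition linC (R : realType) (d : nat) (w : 'rV[R]_d) (b : R) (x : 'rV[R]_d) : bool :=
  0 < dotp w x + b.

Definition Omega (R : realType) (d : nat) (C : 'rV[R]_d -> bool) (v : 'rV[R]_d)
  : set 'rV[R]_d := [set x | C (x + v) != C x].

Definition Dset (R : realType) (d : nat) (p : \bar R) (eps delta : R) (mu0 : 'rV[R]_d)
  : set 'rV[R]_d := [set v | pnorm p v <= eps /\ `|dotp v mu0| <= delta].

Definition OmegaD (R : realType) (d : nat) (C : 'rV[R]_d -> bool) (p : \bar R)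
  (eps delta : R) (mu0 : 'rV[R]_d) : set 'rV[R]_d :=
  [set x | exists x', pnorm p (x - x') <= eps /\ `|dotp (x - x') mu0| <= delta
                      /\ C x' != C x].

(* Main.v *)
Require Import Defs.
From HB Require Import structures.
From mathcomp Require Import all_boot all_order all_algebra.
From mathcomp Require Import all_classical all_reals all_analysis.
From mathcomp Require Import lra.
Import Order.TTheory GRing.Theory Num.Theory.
Local Open Scope ring_scope.
Local Open Scope classical_set_scope.

Lemma pnormN (R : realType) (d : nat) (p : \bar R) (v : 'rV[R]_d) :
  pnorm p (- v) = pnorm p v.
Proof.
case: p => [r| |] //=.
  by congr (_ `^ _); apply: eq_bigr => i _; rewrite mxE normrN.
by apply: eq_bigr => i _; rewrite mxE normrN.
Qed.

Lemma dotpNl (R : realType) (d : nat) (v m : 'rV[R]_d) :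
  dotp (- v) m = - dotp v m.
Proof. by rewrite /dotp -sumrN; apply: eq_bigr => i _; rewrite mxE mulNr. Qed.

Lemma dotpDr (R : realType) (d : nat) (w x v : 'rV[R]_d) :
  dotp w (x + v) = dotp w x + dotp w v.
Proof. by rewrite /dotp -big_split; apply: eq_bigr => i _; rewrite mxE mulrDr. Qed.

Lemma dotpNr (R : realType) (d : nat) (w v : 'rV[R]_d) :
  dotp w (- v) = - dotp w v.
Proof. by rewrite /dotp -sumrN; apply: eq_bigr => i _; rewrite mxE mulrN. Qed.

Lemma neq_lt (R : realType) (a b : R) :
  ((0 < a) != (0 < b)) <-> ((0 < a) /\ (b <= 0)) \/ ((a <= 0) /\ (0 < b)).
Proof.
case: (ltrP 0 a) => ha; case: (ltrP 0 b) => hb /=; split => //;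
  try lra; try (move=> _; (by left) || (by right)).
Qed.

Lemma DN (R : realType) (d : nat) (p : \bar R) (eps delta : R) (mu0 v : 'rV[R]_d) :
  v \in Dset p eps delta mu0 -> - v \in Dset p eps delta mu0.
Proof.
rewrite !inE /Dset /= => -[h1 h2]; split; first by rewrite pnormN.
by rewrite dotpNl normrN.
Qed.

Theorem lemma5 (R : realType) (d : nat) (p : \bar R) (w : 'rV[R]_d) (b : R)
  (mu0 : 'rV[R]_d) (eps delta : R) (u : 'rV[R]_d) :
  (1 <= p)%E -> w != 0 -> Num.sqrt (dotp mu0 mu0) = 1 ->
  0 < eps -> 0 <= delta ->
  u \in Dset p eps delta mu0 ->
  (forall v, v \in Dset p eps delta mu0 -> `|dotp w v| <= `|dotp w u|) ->
  OmegaD (linC w b) p eps delta mu0 =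
    Omega (linC w b) u `|` Omega (linC w b) (- u).
Proof.
move=> _ _ _ _ _ uD umax.
apply/seteqP; split => x /=.
- case=> x' [h1 [h2 h3]].
  have vD : x' - x \in Dset p eps delta mu0.
    rewrite -opprB; apply: DN; rewrite inE; by split.
  have := umax _ vD; rewrite ler_norml => /andP [c1 c2].
  have ex' : x' = x + (x' - x) by rewrite addrC subrK.
  set v := x' - x in vD c1 c2 ex'; clearbody v.
  move: h3; rewrite ex' /linC !dotpDr => /neq_lt h3.
  rewrite /Omega /linC /= !dotpDr dotpNr.
  rewrite !neq_lt.
  have [hm|hm] := lerP 0 (dotp w u).
    rewrite ger0_norm // in c1 c2; case: h3 => -[H1 H2]; first [by left; left; split; lra | by left; right; split; lra | by right; left; split; lra | by right; right; split; lra].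
  rewrite ltr0_norm // in c1 c2; case: h3 => -[H1 H2]; first [by left; left; split; lra | by left; right; split; lra | by right; left; split; lra | by right; right; split; lra].
- have uD' : - u \in Dset p eps delta mu0 by apply: DN.
  move: uD uD'; rewrite !inE /Dset /= => -[a1 a2] [a3 a4].
  case=> h; [exists (x + u) | exists (x + - u)];
    rewrite opprD addrA subrr add0r; do ! split => //;
    by rewrite ?opprK ?pnormN ?dotpNl ?normrN.
Qed.
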